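(* Let $p>1$, $\psi(w)=\frac1p\|w\|_p^p$ on $\mathbb{R}^d$, and let $L:\mathbb{R}^d\to\mathbb{R}$ be differentiable and convex. Let $w_{t+1}$ be obtained from $w_t$ by the mirror descent update $\nabla\psi(w_{t+1})=\nabla\psi(w_t)-\eta\nabla L(w_t)$, where $\eta>0$ is such that $\psi-\eta L$ is convex. Then $$\frac{p-1}{p}\|w_{t+1}\|_p^p-\frac{p-1}{p}\|w_t\|_p^p+\eta L(w_{t+1})-\eta L(w_t)\le\langle-\eta\nabla L(w_t),w_t\rangle.$$
   Context: In the paper $L(w)=\frac1n\sum_i\ell(y_i\langle w,x_i\rangle)$ with $\ell$ differentiable, decreasing and convex. *)

(* Defs.v *)
From HB Require Import structures.
From mathcomp Require Import all_boot all_order all_algebra.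
From mathcomp Require Import all_classical all_reals all_analysis.
Set Implicit Arguments. Unset Strict Implicit. Unset Printing Implicit Defensive.
Import Order.TTheory GRing.Theory Num.Theory.
Import numFieldNormedType.Exports.
Local Open Scope ring_scope.

Definition ebasis (R : realType) (d : nat) (i : 'I_d) : 'rV[R]_d := delta_mx 0 i.

Definition dotp (R : realType) (d : nat) (u v : 'rV[R]_d) : R :=
  \sum_(i < d) u 0 i * v 0 i.

Definition grad (R : realType) (d : nat) (f : 'rV[R]_d -> R) (w : 'rV[R]_d) : 'rV[R]_d :=
  \row_(i < d) derive f w (ebasis R i).

Definition convex_fun (R : realType) (d : nat) (f : 'rV[R]_d -> R) : Prop :=
  forall (x y : 'rV[R]_d) (t : R), 0 <= t -> t <= 1 ->
    f (t *: x + (1 - t) *: y) <= t * f x + (1 - t) * f y.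

Definition pnorm_pow (R : realType) (d : nat) (p : R) (w : 'rV[R]_d) : R :=
  \sum_(i < d) `|w 0 i| `^ p.

Definition psi (R : realType) (d : nat) (p : R) (w : 'rV[R]_d) : R :=
  p^-1 * pnorm_pow p w.

(* Main.v *)
Require Import Defs.
From HB Require Import structures.
From mathcomp Require Import all_boot all_order all_algebra.
From mathcomp Require Import all_classical all_reals all_analysis.
From mathcomp Require Import lra ring.
Import Order.TTheory GRing.Theory Num.Theory.
Import numFieldNormedType.Exports.
Local Open Scope ring_scope.
Local Open Scope classical_set_scope.

Section S.
Variable R : realType.

Lemma hder0 (p : R) : 1 < p -> is_derive (0:R) 1 (fun y : R => `|y| `^ p) 0.
Proof.
move=> p1.
have p0 : p != 0 by rewrite gt_eqF // (lt_trans ltr01 p1).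
have p10 : 0 < p - 1 by rewrite subr_gt0.
suff H : (fun h : R => h^-1 *: (((fun y : R => `|y| `^ p) \o shift 0) (h *: 1) - `|0:R| `^ p)) @ 0^' --> 0.
  apply: DeriveDef; first by apply/cvg_ex; exists 0.
  exact: cvg_lim H.
apply/cvgr0Pnorm_lt => e e0.
have H : \forall a \near (0:R)^'+, `|a `^ (p-1)| < e.
  by move: e e0; apply/cvgr0Pnorm_lt; exact: powR_cvg0.
rewrite near_withinE in H.
have Hn : \forall s \near (0:R), 0 < `|s| -> `|(`|s|) `^ (p-1)| < e.
  have nc := @norm_continuous _ R^o 0. move: nc; rewrite /continuous_at /= normr0 => nc. exact: (nc _ H).
rewrite near_withinE; apply: filterS Hn => s Hs sn0.
have s0 : 0 < `|s| by rewrite normr_gt0.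
move: (Hs s0).
rewrite /= normr0 powR0 // subr0 addr0 /GRing.scale /= mulr1.
rewrite normrM normrV ?unitfE // (ger0_norm (powR_ge0 _ _)).
rewrite (ger0_norm (powR_ge0 _ _)) -(mulr_powRB1 (normr_ge0 s) (lt_trans ltr01 p1)) mulrA mulVf ?normr_eq0 // mul1r.
done.
Unshelve. all: by end_near. Qed.

Lemma hder (p x : R) : 1 < p ->
  is_derive x 1 (fun y : R => `|y| `^ p) (p * Num.sg x * `|x| `^ (p - 1)).
Proof.
move=> p1; case: (ltrgt0P x) => [x0|x0|->].
- rewrite gtr0_sg // mulr1.
  apply: (near_eq_is_derive _ (is_derive1_powR p x0)).
  near=> y; rewrite gtr0_norm //; near: y; exact: lt_nbhsr.
- rewrite ltr0_sg // mulrN1 -mulrN1.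
  have nx : 0 < - x by rewrite oppr_gt0.
  have := is_derive1_comp (is_derive1_powR p nx) (is_deriveNid x 1).
  rewrite mulrAC; move=> H; apply: (near_eq_is_derive _ H).
  near=> y; rewrite /= ltr0_norm //; near: y; exact: lt_nbhsl.
- by rewrite sgr0 mulr0 mul0r; exact: hder0.
Unshelve. all: by end_near. Qed.

Lemma hmul (p x : R) : 1 < p -> x * (p * Num.sg x * `|x| `^ (p - 1)) = p * `|x| `^ p.
Proof.
move=> p1; have p0 : 0 < p by exact: lt_trans ltr01 p1.
case: (eqVneq x 0) => [->|x0]; first by rewrite mul0r normr0 powR0 ?mulr0 // gt_eqF.
rewrite -[in RHS](mulr_powRB1 (normr_ge0 x) p0) normrEsg.
by rewrite !mulrA [x * p]mulrC -[p * x * _]mulrA [x * Num.sg x]mulrC !mulrA.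
Qed.

Lemma coord_derive (d : nat) (a v : 'rV[R]_d) (j : 'I_d) :
  is_derive a v (fun w : 'rV[R]_d => w 0 j) (v 0 j).
Proof.
have H : (fun h : R => h^-1 *: (((fun w : 'rV[R]_d => w 0 j) \o shift a) (h *: v) - a 0 j)) @ 0^' --> v 0 j.
  apply: (@cvg_trans _ ((fun=> v 0 j) @ (0:R)^')); last exact: cvg_cst.
  apply: near_eq_cvg; near=> h.
  have h0 : h != 0 by near: h; exact: nbhs_dnbhs_neq.
  by rewrite /= !mxE addrK /GRing.scale /= mulrA mulVf // mul1r.
exact: (@DeriveDef _ _ _ a v _ (v 0 j) (cvgP _ H) (cvg_lim _ H)).
Unshelve. all: by end_near. Qed.

Lemma comp_derive (d : nat) (g : R -> R) (dg dc : R) (a v : 'rV[R]_d) (c : 'rV[R]_d -> R) :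
  is_derive (c a) 1 g dg -> is_derive a v c dc -> differentiable c a ->
  is_derive a v (g \o c) (dc * dg).
Proof.
move=> [gd gv] [cd cv] cdiff.
have gdiff : differentiable g (c a) by apply/derivable1_diffP.
have gcd : differentiable (g \o c) a by apply: differentiable_comp.
apply: DeriveDef; first exact: diff_derivable.
rewrite deriveE // diff_comp // /= -(deriveE v cdiff) cv deriv1E // derive1E gv.
by [].
Qed.

Lemma psi_derive (d : nat) (p : R) (a v : 'rV[R]_d) : 1 < p ->
  is_derive a v (psi p)
    (p^-1 * \sum_(j < d) v 0 j * (p * Num.sg (a 0 j) * `|a 0 j| `^ (p - 1))).
Proof.
move=> p1.
have E : psi p = p^-1 \*: \sum_(j < d) ((fun y : R => `|y| `^ p) \o (fun w : 'rV[R]_d => w 0 j)).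
  by apply/funext => w; rewrite /psi /pnorm_pow fct_sumE.
rewrite E; apply: is_deriveZ; apply: is_derive_sum => j.
apply: comp_derive; [exact: hder | exact: coord_derive | exact: differentiable_coord].
Qed.

Lemma grad_psiE (d : nat) (p : R) (a : 'rV[R]_d) (i : 'I_d) : 1 < p ->
  grad (psi p) a 0 i = p^-1 * (p * Num.sg (a 0 i) * `|a 0 i| `^ (p - 1)).
Proof.
move=> p1; have [_ E] := @psi_derive d p a (ebasis R i) p1; rewrite /grad mxE E.
congr (_ * _); rewrite (bigD1 i) //= big1 ?addr0.
  by rewrite /ebasis mxE !eqxx mul1r.
by move=> j ji; rewrite /ebasis mxE (negbTE ji) andbF mul0r.
Qed.

Lemma D_psiE (d : nat) (p : R) (a u : 'rV[R]_d) : 1 < p ->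
  'D_u (psi p) a = \sum_(i < d) u 0 i * grad (psi p) a 0 i.
Proof.
move=> p1; have [_ ->] := @psi_derive d p a u p1; rewrite mulr_sumr.
by apply: eq_bigr => i _; rewrite grad_psiE // mulrCA.
Qed.

Lemma euler_psi (d : nat) (p : R) (a : 'rV[R]_d) : 1 < p ->
  \sum_(i < d) a 0 i * grad (psi p) a 0 i = pnorm_pow p a.
Proof.
move=> p1; have p0 : p != 0 by rewrite gt_eqF // (lt_trans ltr01 p1).
rewrite /pnorm_pow; apply: eq_bigr => i _.
by rewrite grad_psiE // mulrCA hmul // mulrA mulVf // mul1r.
Qed.

Lemma D_LE (d : nat) (L : 'rV[R]_d -> R) (a u : 'rV[R]_d) : differentiable L a ->
  'D_u L a = \sum_(i < d) u 0 i * grad L a 0 i.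
Proof.
move=> dL; rewrite deriveE // {1}(row_sum_delta u) linear_sum.
apply: eq_bigr => i _; rewrite linearZ /grad mxE deriveE //.
Qed.

Lemma grad_ineq (d : nat) (F : 'rV[R]_d -> R) (w w' : 'rV[R]_d) :
  convex_fun F -> derivable F w (w' - w) -> 'D_(w' - w) F w <= F w' - F w.
Proof.
move=> cF dF.
set g := (fun h : R => h^-1 *: ((F \o shift w) (h *: (w' - w)) - F w)).
have Hr : g @ 0^'+ --> 'D_(w' - w) F w.
  apply: cvg_dnbhs_at_right; exact: dF.
rewrite -(cvg_lim _ Hr); last exact: norm_hausdorff.
apply: limr_le; first by apply/cvg_ex; exists ('D_(w' - w) F w).
near=> t.
have t0 : 0 < t by near: t; exact: nbhs_right_gt.
have t1 : t <= 1 by near: t; exact: nbhs_right_le.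
have E : t *: (w' - w) + w = t *: w' + (1 - t) *: w.
  by rewrite scalerBr scalerBl scale1r [RHS]addrA [RHS]addrAC.
have := cF w' w t (ltW t0) t1; rewrite -E => Hc.
change (t^-1 * (F (t *: (w' - w) + w) - F w) <= F w' - F w).
rewrite ler_pdivrMl //.
lra.
Unshelve. all: by end_near. Qed.
End S.

Local Close Scope classical_set_scope.

Theorem lemma6 (R : realType) (d : nat) (p eta : R) (L : 'rV[R]_d -> R)
  (w w' : 'rV[R]_d) :
  1 < p ->
  (forall x : 'rV[R]_d, differentiable L x) ->
  convex_fun L ->
  0 < eta ->
  convex_fun (fun x => psi p x - eta * L x) ->
  grad (psi p) w' = grad (psi p) w - eta *: grad L w ->
  (p - 1) / p * pnorm_pow p w' - (p - 1) / p * pnorm_pow p w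
    + eta * L w' - eta * L w
  <= dotp (- (eta *: grad L w)) w.
Proof.
move=> p1 dL _ eta0 cF Hg.
have p0 : p != 0 by rewrite gt_eqF // (lt_trans ltr01 p1).
set v := w' - w.
have Gi : forall i, grad (psi p) w' 0 i = grad (psi p) w 0 i - eta * grad L w 0 i.
  by move=> i; rewrite Hg !mxE.
have dpsi : derivable (psi p) w v.
  by have [] := @psi_derive R d p w v p1.
have dLv : derivable L w v by exact: diff_derivable.
have EF : (fun x => psi p x - eta * L x) = psi p - eta \*: L.
  by apply/funext => x.
have ID : is_derive w v (psi p - eta \*: L) ('D_v (psi p) w - eta *: 'D_v L w).
  apply: is_deriveB; first exact: derivableP.
  apply: is_deriveZ; exact: derivableP.
have [dFv DF] := ID.
rewrite -EF in dFv DF.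
have := @grad_ineq R d _ w w' cF dFv; rewrite -/v DF (@D_psiE R d p w v p1) (@D_LE R d L w v (dL w)) => {DF}.
set S := \sum_(i < d) w 0 i * grad L w 0 i.
have E1 : \sum_(i < d) v 0 i * grad (psi p) w 0 i - eta *: \sum_(i < d) v 0 i * grad L w 0 i
    = pnorm_pow p w' - (pnorm_pow p w - eta * S).
  change (\sum_(i < d) v 0 i * grad (psi p) w 0 i - eta * \sum_(i < d) v 0 i * grad L w 0 i
    = pnorm_pow p w' - (pnorm_pow p w - eta * S)).
  rewrite -(@euler_psi R d p w' p1) -(@euler_psi R d p w p1) /S !mulr_sumr -!sumrB.
  apply: eq_bigr => i _.
  rewrite Gi !mxE; ring.
have E2 : dotp (- (eta *: grad L w)) w = - (eta * S).
  rewrite /dotp /S mulr_sumr -sumrN; apply: eq_bigr => i _.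
  rewrite !mxE; ring.
rewrite E1 E2 => H.
have -> : (p - 1) / p = 1 - p^-1 by rewrite mulrBl divff // mul1r.
move: H; rewrite /psi; lra.
Qed.
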